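(* Let $N\ge2$, $x_1>x_2>\cdots>x_N$ be real, and $\rho=\sum_{j=1}^N\rho_j\delta_{x_j}$ with $\rho_j>0$, $\sum\rho_j=1$. For $t\ge0$ let $\rho_t=e^{2tx}d\rho(x)/\int e^{2tx}d\rho(x)$, and for $1\le j\le N$ let $x_1^{(j)}(t)>\cdots>x_j^{(j)}(t)$ be the zeros of the monic orthogonal polynomial $P_j(x;\rho_t)$. Then for each $j=1,\dots,N$ and $k=1,\dots,j$, $\lim_{t\to\infty}x_k^{(j)}(t)=x_k$, and moreover $|x_k^{(j)}(t)-x_k|=O(e^{-ct})$ as $t\to\infty$, where $c=\min_{i=1,\dots,N-1}(x_i-x_{i+1})$.
   Context: $P_j(x;\rho_t)$ is the unique monic polynomial of degree $j$ orthogonal in $L^2(\rho_t)$ to all polynomials of degree less than $j$; its zeros are real and simple. *)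

(* Defs.v *)
From HB Require Import structures.
From mathcomp Require Import all_boot all_order all_algebra.
From mathcomp Require Import all_classical all_reals all_analysis.
Set Implicit Arguments. Unset Strict Implicit. Unset Printing Implicit Defensive.
Import Order.TTheory GRing.Theory Num.Theory.
Local Open Scope ring_scope.

(* Points x 1 > ... > x N, weights rho 1, ..., rho N (1-based, as in the paper).
   rho = sum_i rho_i delta_{x_i};  rho_t = e^{2tx} d rho(x) / int e^{2tx} d rho. *)

Definition Zt (R : realType) (N : nat) (rho x : nat -> R) (t : R) : R :=
  \sum_(1 <= i < N.+1) rho i * expR (2 * t * x i).

Definition wt (R : realType) (N : nat) (rho x : nat -> R) (t : R) (i : nat) : R :=
  rho i * expR (2 * t * x i) / Zt N rho x t.

Definition ipt (R : realType) (N : nat) (rho x : nat -> R) (t : R)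
    (p q : {poly R}) : R :=
  \sum_(1 <= i < N.+1) wt N rho x t i * p.[x i] * q.[x i].

(* P is a monic polynomial of degree j orthogonal in L^2(rho_t) to all
   polynomials of degree < j (i.e. P = P_j(x; rho_t), which is unique). *)
Definition is_monic_OP (R : realType) (N : nat) (rho x : nat -> R) (t : R)
    (j : nat) (P : {poly R}) : Prop :=
  P \is monic /\ size P = j.+1 /\
  forall q : {poly R}, (size q <= j)%N -> ipt N rho x t P q = 0.

Definition mingap (R : realType) (N : nat) (x : nat -> R) : R :=
  \big[Num.min/(x 1%N - x 2%N)]_(1 <= i < N) (x i - x i.+1).

(* Main.v *)
Require Import Defs.
From HB Require Import structures.
From mathcomp Require Import all_boot all_order all_algebra.
From mathcomp Require Import all_classical all_reals all_analysis.
Import Order.TTheory GRing.Theory Num.Theory.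
From mathcomp Require Import zify ring lra.
Import numFieldNormedType.Exports.
Local Open Scope classical_set_scope.
Local Open Scope ring_scope.
Set Implicit Arguments. Unset Strict Implicit. Unset Printing Implicit Defensive.
Lemma factor_monic (R : realType) (p : {poly R}) (j : nat) (z : nat -> R) :
  p \is monic -> size p = j.+1 ->
  (forall k l : nat, (1 <= k)%N -> (k < l)%N -> (l <= j)%N -> z l < z k) ->
  (forall k : nat, (1 <= k <= j)%N -> root p (z k)) ->
  p = \prod_(m <- index_iota 1 j.+1) ('X - (z m)%:P).
Proof.
move=> mon sz dec rt.
have [q Hq] : exists q, p = q * \prod_(w <- map z (index_iota 1 j.+1)) ('X - w%:P).
  apply: uniq_roots_prod_XsubC.
    apply/allP => w /mapP [m]; rewrite mem_index_iota => Hm ->; exact: rt.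
  rewrite uniq_rootsE map_inj_in_uniq ?iota_uniq // => a b.
  rewrite !mem_index_iota => /andP[a1 a2] /andP[b1 b2] Hab.
  case: (ltngtP a b) => // Hlt.
  - by move: (dec a b a1 Hlt b2); rewrite Hab ltxx.
  - by move: (dec b a b1 Hlt a2); rewrite Hab ltxx.
rewrite big_map in Hq.
set Pr := \prod_(_ <- _) _ in Hq.
have mPr : Pr \is monic by exact: monic_prod_XsubC.
have sPr : size Pr = j.+1 by rewrite size_prod_XsubC size_iota subn1.
have q0 : q != 0.
  apply/eqP => q0; move: sz; rewrite Hq q0 mul0r size_poly0 //.
have sq : size q = 1%N.
  move: sz; rewrite Hq size_Mmonic // sPr addnS /=. move=> H. by apply/eqP; rewrite -(eqn_add2r j) H add1n.
have q1 : q = 1.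
  rewrite [q]size1_polyC ?sq //.
  move/monicP: mon; rewrite Hq lead_coef_Mmonic // lead_coefE sq /= => ->.
  by [].
by rewrite Hq q1 mul1r.
Qed.
Lemma mingap_le (R : realType) (N : nat) (x : nat -> R) (i : nat) :
  (1 <= i)%N -> (i < N)%N -> mingap N x <= x i - x i.+1.
Proof.
move=> i1 iN; rewrite /mingap.
apply: le_trans (le_bigmin_nat (fun _ => true) (fun i => x i - x i.+1) i1 iN) _.
rewrite big_ltn // big_geq //. by rewrite ge_min lexx.
Qed.

Lemma mingap_gt0 (R : realType) (N : nat) (x : nat -> R) :
  (2 <= N)%N ->
  (forall i l : nat, (1 <= i)%N -> (i < l)%N -> (l <= N)%N -> x l < x i) ->
  0 < mingap N x.
Proof.
move=> N2 dec; rewrite /mingap big_nat_cond.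
apply: (big_ind (fun v => 0 < v)).
- by rewrite subr_gt0; apply: dec.
- by move=> a b a0 b0; rewrite lt_min a0 b0.
- move=> i; rewrite andbT => /andP[i1 iN]; rewrite subr_gt0; apply: dec => //.
Qed.

Lemma mingap_gap (R : realType) (N : nat) (x : nat -> R) (k m : nat) :
  (forall i l : nat, (1 <= i)%N -> (i < l)%N -> (l <= N)%N -> x l < x i) ->
  (1 <= k)%N -> (k < m)%N -> (m <= N)%N -> mingap N x <= x k - x m.
Proof.
move=> dec k1 km mN.
have e : m = m.-1.+1 by lia.
have h1 : mingap N x <= x m.-1 - x m.-1.+1 by apply: mingap_le; lia.
rewrite -e in h1.
apply: le_trans h1 _.
rewrite lerD2r.
have [->|kl] := eqVneq k m.-1; first by [].
by apply/ltW/dec; lia.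
Qed.
Lemma size_sub_monic (R : realType) (P Q : {poly R}) (j : nat) :
  P \is monic -> size P = j.+1 -> Q \is monic -> size Q = j.+1 ->
  (size (Q - P)%R <= j)%N.
Proof.
move=> mP sP mQ sQ; apply/leq_sizeP => i ij.
rewrite coefB.
have [->|ij'] := eqVneq i j.
  move/monicP: mP; move/monicP: mQ; rewrite !lead_coefE sP sQ /= => -> ->.
  by rewrite subrr.
rewrite !nth_default ?subrr // ?sP ?sQ; lia.
Qed.

Lemma ipt_min (R : realType) (N : nat) (rho x : nat -> R) (t : R) (j : nat)
  (P Q : {poly R}) :
  is_monic_OP N rho x t j P -> Q \is monic -> size Q = j.+1 ->
  (forall i, (1 <= i <= N)%N -> 0 <= wt N rho x t i) ->
  ipt N rho x t P P <= ipt N rho x t Q Q.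
Proof.
move=> [mP [sP orth]] mQ sQ w0.
have o := orth _ (size_sub_monic mP sP mQ sQ).
rewrite -[ipt _ _ _ _ P P]addr0 -(mulr0 2) -o /ipt mulr_sumr -big_split /=.
rewrite big_nat_cond [X in _ <= X]big_nat_cond.
apply: ler_sum => i; rewrite andbT => /andP[i1 iN].
have wi := w0 i (_ : (1 <= i <= N)%N).
rewrite hornerD hornerN.
set a := P.[x i]; set b := Q.[x i]; set w := wt N rho x t i.
have -> : w * b * b = w * a * a + 2 * (w * a * (b - a)) + w * (b - a)^+2 by ring.
rewrite lerDl mulr_ge0 ?sqr_ge0 // wi //; lia.
Qed.
Definition Qx (R : realType) (j : nat) (x : nat -> R) : {poly R} :=
  \prod_(m <- index_iota 1 j.+1) ('X - (x m)%:P).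

Definition Ak (R : realType) (N j k : nat) (rho x : nat -> R) : R :=
  \sum_(1 <= i < N.+1) rho i / rho k * (Qx j x).[x i] ^+ 2.

Lemma Qx_root (R : realType) (j : nat) (x : nat -> R) i :
  (1 <= i <= j)%N -> (Qx j x).[x i] = 0.
Proof.
move=> ij; rewrite /Qx horner_prod (bigD1_seq i) ?iota_uniq ?mem_index_iota //=.
by rewrite hornerXsubC subrr mul0r.
Qed.

Lemma Ak_ge0 (R : realType) (N j k : nat) (rho x : nat -> R) :
  (forall i : nat, (1 <= i <= N)%N -> 0 < rho i) -> (1 <= k <= N)%N ->
  0 <= Ak N j k rho x.
Proof.
move=> rp kN; rewrite /Ak big_nat_cond; apply: sumr_ge0 => i.
rewrite andbT => iN.
by rewrite mulr_ge0 ?sqr_ge0 // divr_ge0 // ltW // rp.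
Qed.

Lemma Zt_gt0 (R : realType) (N : nat) (rho x : nat -> R) t :
  (1 <= N)%N -> (forall i : nat, (1 <= i <= N)%N -> 0 < rho i) ->
  0 < Zt N rho x t.
Proof.
move=> N1 rp; rewrite /Zt (bigD1_seq 1%N) ?iota_uniq ?mem_index_iota //=.
apply: ltr_pwDl.
  by rewrite mulr_gt0 ?expR_gt0 // rp.
rewrite big_seq_cond; apply: sumr_ge0 => i /andP[]; rewrite mem_index_iota => iN _.
by rewrite mulr_ge0 ?expR_ge0 // ltW // rp.
Qed.

Lemma key_bound (R : realType) (N : nat) (x rho : nat -> R) (j k : nat)
  (t : R) (P : {poly R}) :
  (forall i l : nat, (1 <= i)%N -> (i < l)%N -> (l <= N)%N -> x l < x i) ->
  (forall i : nat, (1 <= i <= N)%N -> 0 < rho i) ->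
  (1 <= k)%N -> (k <= j)%N -> (j <= N)%N -> 0 <= t ->
  is_monic_OP N rho x t j P ->
  P.[x k] ^+ 2 <= Ak N j k rho x * expR (- mingap N x * t) ^+ 2.
Proof.
move=> dec rp k1 kj jN t0 OP.
have N1 : (1 <= N)%N by lia.
have Z0 := Zt_gt0 x t N1 rp.
set c := mingap N x.
have w0 : forall i, (1 <= i <= N)%N -> 0 < wt N rho x t i.
  by move=> i iN; rewrite /wt divr_gt0 // mulr_gt0 ?expR_gt0 // rp.
have h1 : wt N rho x t k * (P.[x k] ^+ 2) <= ipt N rho x t P P.
  rewrite /ipt (bigD1_seq k) ?iota_uniq ?mem_index_iota //=; last lia.
  rewrite -mulrA -expr2 lerDl.
  rewrite big_seq_cond; apply: sumr_ge0 => i /andP[]; rewrite mem_index_iota => iN _.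
  by rewrite -mulrA -expr2 mulr_ge0 ?sqr_ge0 // ltW // w0.
have h2 := ipt_min OP (monic_prod_XsubC _ _ _) (_ : size (Qx j x) = j.+1)
   (fun i iN => ltW (w0 i iN)).
have h3 : ipt N rho x t (Qx j x) (Qx j x) <=
   wt N rho x t k * (Ak N j k rho x * expR (- c * t) ^+ 2).
  rewrite /ipt /Ak mulr_suml mulr_sumr big_nat_cond [X in _ <= X]big_nat_cond.
  apply: ler_sum => i; rewrite andbT => iN.
  have [ij|ij] := leqP i j.
    rewrite Qx_root; last lia.
    by rewrite !mulr0 expr0n /= !(mulr0, mul0r).
  rewrite -mulrA -expr2.
  have -> : wt N rho x t k * (rho i / rho k * (Qx j x).[x i] ^+ 2 * expR (- c * t) ^+ 2)
     = (rho i * (expR (2 * t * x k) * expR (- c * t) ^+ 2) / Zt N rho x t) * (Qx j x).[x i] ^+ 2.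
    rewrite /wt; field.
    rewrite gt_eqF // gt_eqF // rp //; lia.
  apply: ler_wpM2r; first exact: sqr_ge0.
  rewrite /wt ler_pM2r ?invr_gt0 // ler_pM2l; last by apply: rp; lia.
  rewrite expr2 -!expRD ler_expR.
  have cg : c <= x k - x i by apply: mingap_gap => //; lia.
  have : 0 <= 2 * t * (x k - x i - c) by rewrite mulr_ge0 ?mulr_ge0 // subr_ge0.
  lra.
have sQ : size (Qx j x) = j.+1 by rewrite /Qx size_prod_XsubC size_iota; lia.
have := le_trans h1 (le_trans (h2 sQ) h3).
rewrite ler_pM2l //; apply: w0; lia.
Qed.
Lemma decay (R : realType) (c B : R) : 0 < c -> 0 < B ->
  exists T, 0 <= T /\ forall t, T <= t -> expR (- c * t) <= B.
Proof.
move=> c0 B0; exists (c * B)^-1; split; first by rewrite ltW // invr_gt0 mulr_gt0.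
move=> t Tt.
rewrite mulNr expRN -[B]invrK lef_pV2 ?posrE ?expR_gt0 ?invr_gt0 //.
have h := expR_ge1Dx (c * t).
apply: le_trans h.
have : B^-1 <= c * t.
  have -> : B^-1 = c * (c * B)^-1 by field; rewrite gt_eqF // gt_eqF.
  by rewrite ler_pM2l.
lra.
Qed.

Lemma le_sum_term (R : realType) (a b i : nat) (F : nat -> R) :
  (a <= i < b)%N -> (forall m, (a <= m < b)%N -> 0 <= F m) ->
  F i <= \sum_(a <= m < b) F m.
Proof.
move=> ib F0; rewrite (bigD1_seq i) ?iota_uniq ?mem_index_iota //=.
rewrite lerDl big_seq_cond; apply: sumr_ge0 => m /andP[]; rewrite mem_index_iota => mb _.
exact: F0.
Qed.

Lemma near_pinfty_of (R : realType) (P : R -> Prop) (T : R) :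
  (forall t, T <= t -> P t) -> \forall t \near +oo, P t.
Proof.
move=> H; exists T; split; first exact: num_real.
by move=> t /ltW; apply: H.
Qed.

Ltac slia := repeat match goal with H : ?T |- _ =>
  lazymatch T with
  | is_true (leq _ _) => fail
  | is_true (_ && _) => fail
  | @eq nat _ _ => fail
  | is_true (@eq_op _ _ _) => fail
  | is_true (negb _) => fail
  | nat => fail
  | _ => clear H end end; lia.

Unset Implicit Arguments.

Theorem theorem2p2 (R : realType) (N : nat) (x rho : nat -> R) :
  (2 <= N)%N ->
  (forall i l : nat, (1 <= i)%N -> (i < l)%N -> (l <= N)%N -> x l < x i) ->
  (forall i : nat, (1 <= i <= N)%N -> 0 < rho i) ->
  \sum_(1 <= i < N.+1) rho i = 1 ->
  forall (j : nat), (1 <= j <= N)%N ->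
  forall (P : R -> {poly R}) (z : R -> nat -> R),
  (forall t : R, 0 <= t -> is_monic_OP N rho x t j (P t)) ->
  (forall t : R, 0 <= t ->
     (forall k l : nat, (1 <= k)%N -> (k < l)%N -> (l <= j)%N -> z t l < z t k) /\
     (forall k : nat, (1 <= k <= j)%N -> root (P t) (z t k))) ->
  forall k : nat, (1 <= k <= j)%N ->
    (z t k @[t --> +oo] --> x k) /\
    (exists C T : R, forall t : R, T <= t ->
        `|z t k - x k| <= C * expR (- (mingap N x) * t)).
Proof.
move=> N2 dec rp _ j /andP[j1 jN] P z HP Hz k /andP[k1 kj].
have c0 : 0 < mingap N x by apply: mingap_gt0.
set c := mingap N x in c0 *.
set eta := c / 4.
have eta0 : 0 < eta by rewrite divr_gt0.
set Asum := \sum_(1 <= m < j.+1) Ak N j m rho x.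
have Ak0 : forall m, (1 <= m <= j)%N -> 0 <= Ak N j m rho x.
  by move=> m mj; apply: Ak_ge0 => //; slia.
have AkS : forall m, (1 <= m <= j)%N -> Ak N j m rho x <= Asum.
  move=> m mj; apply: (le_sum_term (F := fun m => Ak N j m rho x)); first slia.
  by move=> m' mj'; apply: Ak0; slia.
have Asum0 : 0 <= Asum by apply: le_trans (Ak0 k _) (AkS k _); slia.
set E := eta ^+ j.
have E0 : 0 < E by rewrite exprn_gt0.
set B := E / (Asum + 1).
have B0 : 0 < B by rewrite divr_gt0 // ltr_wpDl.
have [T [T0 HT]] := decay c0 B0.
have fac : forall t, 0 <= t -> forall y, (P t).[y] = \prod_(1 <= m < j.+1) (y - z t m).
  move=> t t0 y; have [mP [sP _]] := HP t t0; have [zd zr] := Hz t t0.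
  rewrite {1}(factor_monic mP sP zd zr) horner_prod.
  by apply: eq_bigr => m _; rewrite hornerXsubC.
have loc : forall t, T <= t -> forall m, (1 <= m <= j)%N -> `|x m - z t m| <= eta.
  move=> t Tt.
  have t0 : 0 <= t by apply: le_trans Tt.
  have eB : expR (- c * t) <= B by apply: HT.
  have [zd zr] := Hz t t0.
  have ex : forall m, (1 <= m <= j)%N ->
      exists m', (1 <= m' <= j)%N /\ `|x m - z t m'| <= eta.
    move=> m mj; apply: contrapT => hn.
    have hall : forall m', (1 <= m' <= j)%N -> eta < `|x m - z t m'|.
      move=> m' mj'; rewrite ltNge; apply/negP => hle; apply: hn; exists m'; by split.
    have h1 : E <= `|(P t).[x m]|.
      have -> : E = \prod_(1 <= i < j.+1) eta by rewrite prodr_const_nat subn1.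
      rewrite fac // normr_prod.
      rewrite big_nat_cond [X in _ <= X]big_nat_cond; apply: ler_prod => i.
      rewrite andbT => im; rewrite (ltW eta0) /= ltW //; apply: hall; slia.
    have m1 : (1 <= m)%N by slia.
    have m2 : (m <= j)%N by slia.
    have h2 := @key_bound R N x rho j m t (P t) dec rp m1 m2 jN t0 (HP t t0).
    have h3 : (P t).[x m] ^+ 2 <= Asum * B ^+ 2.
      apply: le_trans h2 _.
      apply: ler_pM; [exact: Ak0|exact: sqr_ge0|exact: AkS|].
      by rewrite ler_sqr ?nnegrE ?expR_ge0 // ltW.
    have h4 : E ^+ 2 <= (P t).[x m] ^+ 2.
      by rewrite -[X in _ <= X]real_normK ?num_real // ler_sqr ?nnegrE ?normr_ge0 // ltW.
    have h5 : Asum * B ^+ 2 < E ^+ 2.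
      have eE : E = B * (Asum + 1) by rewrite /B mulfVK // gt_eqF // ltr_wpDl.
      rewrite eE; nra.
    by move: (le_trans h4 h3); rewrite leNgt h5.
  have mono : forall m1 m2 m1' m2', (1 <= m1)%N -> (m1 < m2)%N -> (m2 <= j)%N ->
      (1 <= m1' <= j)%N -> (1 <= m2' <= j)%N ->
      `|x m1 - z t m1'| <= eta -> `|x m2 - z t m2'| <= eta -> (m1' < m2')%N.
    move=> m1 m2 m1' m2' h1 h12 h2 hm1 hm2 d1 d2.
    have g : c <= x m1 - x m2 by apply: mingap_gap => //; slia.
    have lt : z t m2' < z t m1'.
      move: d1 d2; rewrite !ler_norml /eta => /andP[a1 a2] /andP[b1 b2]; lra.
    case: (ltngtP m1' m2') => // hh.
    - have hz : z t m1' < z t m2' by apply: zd => //; slia.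
      by move: lt; rewrite ltNge ltW.
    - by move: lt; rewrite hh ltxx.
  have low : forall m, (1 <= m <= j)%N -> forall m', (1 <= m' <= j)%N ->
      `|x m - z t m'| <= eta -> (m <= m')%N.
    elim=> [|m IH]; first by case/andP.
    move=> mj m' mj' d.
    have [m0|m0] := eqVneq m 0%N; first by rewrite m0; case/andP: mj'.
    have mj0 : (1 <= m <= j)%N by slia.
    have [m'' [mj'' d'']] := ex m mj0.
    have i1 := IH mj0 m'' mj'' d''.
    have m1 : (1 <= m)%N by slia.
    have m2 : (m.+1 <= j)%N by slia.
    have i2 := mono m m.+1 m'' m' m1 (ltnSn m) m2 mj'' mj' d'' d.
    slia.
  have up : forall d m, (m + d = j)%N -> (1 <= m)%N -> forall m', (1 <= m' <= j)%N ->
      `|x m - z t m'| <= eta -> (m' <= m)%N.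
    elim=> [|d IH] m e m1 m' mj' dd; first slia.
    have mj0 : (1 <= m.+1 <= j)%N by slia.
    have [m'' [mj'' d'']] := ex m.+1 mj0.
    have e' : (m.+1 + d)%N = j by slia.
    have i1 := IH m.+1 e' (ltn0Sn m) m'' mj'' d''.
    have m2 : (m.+1 <= j)%N by slia.
    have i2 := mono m m.+1 m' m'' m1 (ltnSn m) m2 mj' mj'' dd d''.
    slia.
  move=> m mj.
  have [m' [mj' d]] := ex m mj.
  have e1 := low m mj m' mj' d.
  have e0 : (m + (j - m))%N = j by slia.
  have m1 : (1 <= m)%N by slia.
  have e2 := up (j - m)%N m e0 m1 m' mj' d.
  have em : m = m' by apply/eqP; rewrite eqn_leq e1 e2.
  by rewrite {2}em.
set L := \prod_(m <- index_iota 1 j.+1 | m != k) (c / 2).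
have L0 : 0 < L by apply: prodr_gt0 => m _; rewrite divr_gt0.
set A := Ak N j k rho x.
have A0 : 0 <= A by apply: Ak0; slia.
set C := (A + 1) / L.
have C0 : 0 < C by rewrite divr_gt0 // ltr_wpDl.
have bound : forall t, T <= t -> `|z t k - x k| <= C * expR (- c * t).
  move=> t Tt.
  have t0 : 0 <= t by apply: le_trans Tt.
  have h1 : `|x k - z t k| * L <= `|(P t).[x k]|.
    rewrite fac // normr_prod (bigD1_seq k) ?iota_uniq ?mem_index_iota //=; last slia.
    apply: ler_wpM2l; first exact: normr_ge0.
    rewrite /L big_seq_cond [X in _ <= X]big_seq_cond.
    apply: ler_prod => m /andP[]; rewrite mem_index_iota => mi mk.
    rewrite divr_ge0 ?(ltW c0) //=.
    have mj : (1 <= m <= j)%N by slia.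
    have d := loc t Tt m mj.
    have g : c <= x k - x m \/ c <= x m - x k.
      case: (ltngtP k m) => hh.
      - by left; apply: mingap_gap => //; slia.
      - by right; apply: mingap_gap => //; slia.
      - by move: mk; rewrite hh eqxx.
    move: d; rewrite ler_norml /eta => /andP[d1 d2].
    rewrite ler_normr.
    case: g => g; apply/orP; [left|right]; lra.
  have kb := @key_bound R N x rho j k t (P t) dec rp k1 kj jN t0 (HP t t0).
  set u := `|x k - z t k| * L in h1.
  have u0 : 0 <= u by rewrite mulr_ge0 // ltW.
  have h2 : u ^+ 2 <= A * expR (- c * t) ^+ 2.
    apply: le_trans kb.
    rewrite -[X in _ <= X]real_normK ?num_real //.
    by rewrite ler_sqr ?nnegrE ?normr_ge0.
  have e0 : 0 < expR (- c * t) := expR_gt0 _.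
  have h3 : u <= (A + 1) * expR (- c * t).
    rewrite leNgt; apply/negP => hlt.
    have : ((A + 1) * expR (- c * t)) ^+ 2 < u ^+ 2.
      rewrite ltr_sqr ?nnegrE //; apply: mulr_ge0; [apply: addr_ge0 => //|exact: ltW].
    move: h2; set e := expR (- c * t) in e0 *. nra.
  by rewrite distrC /C mulrAC ler_pdivlMr.
split; last by exists C, T.
apply/cvgrPdist_le => eps eps0.
have eC : 0 < eps / C by rewrite divr_gt0.
have [T' [T'0 HT']] := decay c0 eC.
apply: (@near_pinfty_of R (fun t => `|x k - z t k| <= eps) (Num.max T T')) => t.
rewrite ge_max => /andP[Tt T't].
have h1 := bound t Tt.
have h2 := HT' t T't.
have h3 : C * expR (- c * t) <= C * (eps / C) by rewrite ler_pM2l.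
have h4 : C * (eps / C) = eps by rewrite mulrC divfK // gt_eqF.
by rewrite distrC; apply: le_trans h1 _; rewrite -h4.
Qed.
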